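(* Let $\pi\in\mathsf{G}_{r,n}$ and let $\text{A-code}(\pi)=(c_1^{[e_1]},c_2^{[e_2]},\dots,c_n^{[e_n]})$. Then $$\ell(\pi)=\sum_{i=1}^n\Bigl(i-c_i+\chi(e_i>0)\cdot\bigl(2(c_i-1)+e_i\bigr)\Bigr),$$ where $\chi(A)=1$ if $A$ holds and $0$ otherwise.
   Context: $\mathsf{G}_{r,n}=C_r\wr\mathfrak S_n$: pairs $(\sigma,\mathbf z)$, $\sigma\in\mathfrak S_n$, $\mathbf z\in(\mathbb Z/r\mathbb Z)^n$, written as words $\sigma_1^{[z_1]}\cdots\sigma_n^{[z_n]}$ (base values $\sigma_i$, colors $z_i\in\{0,\dots,r-1\}$), with product $(\sigma,\mathbf z)(\rho,\mathbf w)=(\sigma\rho,\mathbf w+\rho(\mathbf z))$, $\rho(\mathbf z)=(z_{\rho(1)},\dots,z_{\rho(n)})$. $\ell(\pi)$ is the minimal number of factors needed to write $\pi$ as a product of $s_0=1^{[1]}2\cdots n$ and $s_1,\dots,s_{n-1}$, where $s_i$ has base permutation $(i\ i+1)$ and all colors $0$. A-code: set $\pi^{(n)}=\pi$; for $j=n,n-1,\dots,1$, if the letter with base value $j$ sits at position $p$ of the word $\pi^{(j)}$ and has color $t$, put $c_j=p$, $e_j=t$, and let $\pi^{(j-1)}$ be obtained from $\pi^{(j)}$ by deleting this letter. Then $\text{A-code}(\pi)=(c_1^{[e_1]},\dots,c_n^{[e_n]})$. *)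

(* Defs.v *)
From HB Require Import structures.
From mathcomp Require Import all_boot all_order all_algebra all_fingroup.
Set Implicit Arguments. Unset Strict Implicit. Unset Printing Implicit Defensive.
Import GRing.Theory.

(* Colors live in Z/rZ, realized (for 0 < r) as the zmodType 'I_(r.-1.+1). *)
Definition color (r : nat) := 'I_(r.-1.+1).

(* An element (sigma, z) of G_{r,n} = C_r wr S_n; sigma i is the base value at
   position i (0-indexed), z i its color. *)
Definition Grn (r n : nat) := ({perm 'I_n} * {ffun 'I_n -> color r})%type.

(* (sigma,z)(rho,w) = (sigma rho, w + rho(z)), with (sigma rho)(i) = sigma(rho i)
   (composition of functions; in MathComp's left-to-right perm product this is
   rho * sigma) and rho(z)_i = z_{rho i}. *)
Definition gmul r n (a b : Grn r n) : Grn r n :=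
  ((b.1 * a.1)%g, [ffun i => (b.2 i + a.2 (b.1 i))%R : color r]).

Definition gone r n : Grn r n := (1%g, [ffun => 0%R : color r]).

Definition s0 r n : Grn r n := (1%g, [ffun i : 'I_n => if (val i == 0)%N then (Zp1 : color r) else (0%R : color r)]).

Definition is_gen r n (g : Grn r n) : bool :=
  (g == s0 r n) ||
  [exists i : 'I_n, exists j : 'I_n,
     (val j == (val i).+1) && (g == (tperm i j, [ffun => 0%R : color r]))].

Definition wprod r n (w : seq (Grn r n)) : Grn r n := foldr (@gmul r n) (gone r n) w.

Definition length_is r n (pi : Grn r n) (k : nat) : Prop :=
  (exists w : seq (Grn r n), all (@is_gen r n) w /\ wprod w = pi /\ size w = k) /\
  (forall w : seq (Grn r n), all (@is_gen r n) w -> wprod w = pi -> k <= size w).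

Definition gword r n (pi : Grn r n) : seq (nat * nat) :=
  [seq ((val (pi.1 i)).+1, val (pi.2 i)) | i <- enum 'I_n].

(* acode_aux j w = [(c_j,e_j); (c_{j-1},e_{j-1}); ...; (c_1,e_1)] where the
   letter of value j sits at (1-based) position c_j of w with color e_j, and
   is deleted before continuing. *)
Fixpoint acode_aux (j : nat) (w : seq (nat * nat)) : seq (nat * nat) :=
  match j with
  | 0 => [::]
  | j'.+1 =>
      let p := find (fun x => x.1 == j) w in
      (p.+1, (nth (0, 0) w p).2) :: acode_aux j' (filter (fun x => x.1 != j) w)
  end.

Definition acode r n (pi : Grn r n) : seq (nat * nat) := rev (acode_aux n (gword pi)).

(* Main.v *)
Require Import Defs.
From mathcomp Require Import all_boot all_order all_algebra all_fingroup zify.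
Set Implicit Arguments. Unset Strict Implicit. Unset Printing Implicit Defensive.
Import GRing.Theory.


Definition pw (x y : nat * nat) : nat :=
  if y.1 < x.1 then 1 else if (x.1 < y.1) && (0 < y.2) then 2 else 0.
Definition cw (x : nat * nat) : nat := (0 < x.2) * x.2.
Fixpoint H (w : seq (nat * nat)) : nat :=
  match w with [::] => 0 | x :: w' => \sum_(y <- w') pw x y + cw x + H w' end.
Definition cross (s1 s2 : seq (nat * nat)) := \sum_(x <- s1) \sum_(y <- s2) pw x y.

Lemma H_cat s1 s2 : H (s1 ++ s2) = H s1 + H s2 + cross s1 s2.
Proof.
elim: s1 => [|x s1 IH] /=; first by rewrite /cross big_nil addn0.
rewrite IH big_cat /cross big_cons /=; lia.
Qed.

Lemma H_swap A B a b : H (A ++ a :: b :: B) + pw b a = H (A ++ b :: a :: B) + pw a b.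
Proof.
rewrite !H_cat /cross.
have -> : \sum_(x <- A) \sum_(y <- a::b::B) pw x y = \sum_(x<-A) \sum_(y <- b::a::B) pw x y.
  by apply: eq_bigr => x _; rewrite !big_cons; lia.
rewrite /= !big_cons; lia.
Qed.

Lemma H_head x x' t : x.1 = x'.1 -> H (x' :: t) + cw x = H (x :: t) + cw x'.
Proof.
move=> e /=.
have -> : \sum_(y <- t) pw x' y = \sum_(y <- t) pw x y by apply: eq_bigr => y _; rewrite /pw e.
lia.
Qed.

Definition T (m : nat) (x : nat * nat) : nat :=
  m - x.1 + (0 < x.2) * (2 * (x.1 - 1) + x.2).
Fixpoint Gsum (a : seq (nat * nat)) : nat :=
  match a with [::] => 0 | x :: a' => T (size a) x + Gsum a' end.

Lemma sum_rev m a : size a = m ->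
  \sum_(i < m) T i.+1 (nth (0,0) (rev a) i) = Gsum a.
Proof.
move=> <-; elim: a => [|x a IH]; first by rewrite big_ord0.
rewrite /= big_ord_recr /= rev_cons nth_rcons size_rev ltnn eqxx -IH addnC.
congr (_ + _); apply: eq_bigr => i _; by rewrite nth_rcons size_rev ltn_ord.
Qed.

Lemma size_acode_aux j w : size (acode_aux j w) = j.
Proof. by elim: j w => [|j IH] w //=; rewrite IH. Qed.

Lemma filter_notin (w : seq (nat * nat)) k : k \notin map fst w ->
  filter (fun y => y.1 != k) w = w.
Proof.
elim: w => //= y w IH; rewrite inE negb_or => /andP[h1 h2].
by rewrite eq_sym h1 IH.
Qed.

Lemma sum_const_in (s : seq (nat * nat)) (F : nat * nat -> nat) c :
  (forall y, y \in s -> F y = c) -> \sum_(y <- s) F y = size s * c.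
Proof.
elim: s => [|y s IH] h; first by rewrite big_nil.
rewrite big_cons IH; last by move=> z zs; apply: h; rewrite inE zs orbT.
rewrite h ?mem_head //=; lia.
Qed.

Lemma Gsum_acode j w : uniq (map fst w) -> map fst w =i iota 1 j ->
  Gsum (acode_aux j w) = H w.
Proof.
elim: j w => [|j IH] w Hu Hm.
  case: w Hu Hm => [|x w] //= _ /(_ x.1); by rewrite inE eqxx.
have Hsz : size w = j.+1.
  by rewrite -(size_map fst) (perm_size (uniq_perm Hu (iota_uniq 1 j.+1) Hm)) size_iota.
have Efm : [seq i.1 | i <- w & i.1 != j.+1] = filter (predC1 j.+1) (map fst w) by rewrite filter_map.
rewrite /= size_acode_aux IH; first last.
- move=> k; rewrite Efm mem_filter Hm !mem_iota /=.
  apply/idP/idP; [move=> /andP[/eqP h1 h2]; lia | move=> h; apply/andP; split; [apply/eqP|]; lia].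
- by rewrite Efm filter_uniq.
have : j.+1 \in map fst w by rewrite Hm mem_iota; lia.
case/mapP => x xw xe.
move: Hsz Hu Hm; case/splitPr: xw => w1 w2 Hsz Hu Hm.
have Hu' := Hu; rewrite map_cat cat_uniq /= in Hu'.
case/and3P: Hu' => _ Hn1 /andP[Hn2 _].
have n1 : x.1 \notin map fst w1.
  apply: contra Hn1 => h; by rewrite /= h.
rewrite xe.
have hfind : find (fun y => y.1 == x.1) (w1 ++ x :: w2) = size w1.
  rewrite find_cat.
  have -> : has (fun y => y.1 == x.1) w1 = false.
    apply/negbTE; apply: contra n1 => /hasP[y yi /eqP ye]; rewrite -ye; exact: map_f.
  by rewrite /= eqxx addn0.
rewrite hfind nth_cat ltnn subnn /=.
rewrite filter_cat /= eqxx /= !filter_notin //.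
rewrite H_cat /= H_cat /cross.
have Hlt : forall y, y \in w1 ++ w2 -> y.1 < x.1.
  move=> y yi.
  have : y.1 \in map fst (w1 ++ x :: w2) by apply: map_f; rewrite mem_cat inE; 
    move: yi; rewrite mem_cat; case/orP=> ->; rewrite ?orbT.
  rewrite Hm mem_iota => /andP[_ h].
  have : y.1 != x.1.
    apply/negP => /eqP ey; move: yi; rewrite mem_cat; case/orP => yi.
    - by move: n1; rewrite -ey (map_f fst yi).
    - by move: Hn2; rewrite -ey (map_f fst yi).
  rewrite -xe; lia.
rewrite [H (x :: w2)]/= (@sum_const_in w2 (pw x) 1); last first.
  by move=> y yi; rewrite /pw Hlt // mem_cat yi orbT.
have -> : \sum_(x0 <- w1) \sum_(y <- x :: w2) pw x0 y =
          size w1 * (2 * (0 < x.2)) + \sum_(x0 <- w1) \sum_(y <- w2) pw x0 y.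
  rewrite -(@sum_const_in w1 (fun x0 => pw x0 x) (2 * (0 < x.2))); last first.
    move=> y yi; rewrite /pw ltnNge ltnW ?Hlt ?mem_cat ?yi //=.
    by case: (0 < x.2).
  rewrite -big_split /=; apply: eq_bigr => y _; by rewrite big_cons.
move: Hsz; rewrite size_cat /= /T /cw => Hsz.
rewrite -xe; case: (0 < x.2); rewrite ?mul1n ?mul0n ?muln0 /=; lia.
Qed.


Lemma H_iota m k : H (map (fun k => (k.+1, 0)) (iota k m)) = 0.
Proof.
elim: m k => [|m IH] k //=.
rewrite IH big_map big1_seq //= => y; rewrite mem_iota /pw /= => /andP[h _].
by rewrite ltnNge ltnW //= andbF.
Qed.

Section G.
Variables r n : nat.
Local Notation G := (Grn r n).

Lemma gmul1 (a : G) : gmul a (gone r n) = a.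
Proof.
case: a => s z; rewrite /gmul /gone /= mul1g; congr (_, _).
by apply/ffunP => i; rewrite !ffunE perm1 add0r.
Qed.

Lemma gmul1l (a : G) : gmul (gone r n) a = a.
Proof.
case: a => s z; rewrite /gmul /gone /= mulg1; congr (_, _).
by apply/ffunP => i; rewrite !ffunE addr0.
Qed.

Lemma gmulA (a b c : G) : gmul (gmul a b) c = gmul a (gmul b c).
Proof.
rewrite /gmul /= mulgA; congr (_, _).
by apply/ffunP => i; rewrite !ffunE permM addrA.
Qed.

Lemma foldr_gmul (w : seq G) x g :
  foldr (@gmul r n) (gmul x g) w = gmul (foldr (@gmul r n) x w) g.
Proof. by elim: w => //= y w ->; rewrite gmulA. Qed.

Lemma wprod_rcons (w : seq G) g : wprod (rcons w g) = gmul (wprod w) g.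
Proof.
by rewrite /wprod foldr_rcons gmul1 -{1}(gmul1l g) foldr_gmul.
Qed.

Definition Lt (pi : G) (x : 'I_n) : nat * nat := ((val (pi.1 x)).+1, val (pi.2 x)).

Lemma gwordE pi : gword pi = map (Lt pi) (enum 'I_n).
Proof. by []. Qed.

Lemma H_gone : H (gword (gone r n)) = 0.
Proof.
have -> : gword (gone r n) = map (fun k => (k.+1, 0)) (iota 0 n).
  rewrite gwordE -val_enum_ord -map_comp; apply: eq_map => i.
  by rewrite /Lt /= perm1 ffunE.
exact: H_iota.
Qed.

Lemma gword_inv (pi : G) :
  uniq (map fst (gword pi)) /\ map fst (gword pi) =i iota 1 n.
Proof.
rewrite gwordE -map_comp; split.
  rewrite map_inj_uniq ?enum_uniq // => x y /= [] /val_inj; exact: perm_inj.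
move=> k; rewrite mem_iota; apply/mapP/idP.
  by case=> x _ ->; rewrite /= ltnS ltn_ord.
move=> /andP[h1 h2].
have hk : k.-1 < n by lia.
exists (pi.1^-1 (Ordinal hk))%g; first by rewrite mem_enum.
by rewrite /= permKV /=; lia.
Qed.
End G.


Lemma val_addZp m (x y : 'I_m.+1) : val (x + y)%R = (val x + val y) %% m.+1.
Proof. by []. Qed.

Lemma val_subZp1 m (a : 'I_m.+1) : 0 < val a -> val (a - Zp1)%R + 1 = val a.
Proof.
move=> ha.
have := val_addZp Zp1 (a - Zp1)%R; rewrite addrC subrK => e.
have hv : val (a - Zp1)%R < m.+1 := ltn_ord _.
move: ha hv; rewrite e; move: (val (a - Zp1)%R) => v; clear e a.
case: m v => [|m] v /=; first by rewrite modn1.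
rewrite (@modn_small 1) //.
case: (ltngtP (1 + v) m.+2) => h.
- by rewrite modn_small // addnC.
- lia.
- by rewrite h modnn.
Qed.

Lemma cw_bound a b v e : v <= e.+1 -> cw (a, v) <= cw (b, e) + 1.
Proof. rewrite /cw /=; case: v => [|v] //=; case: e => [|e] //=; lia. Qed.

Lemma pw_bound a b : pw b a <= pw a b + 1.
Proof. rewrite /pw; repeat case: ifP; move=> *; lia. Qed.

Lemma incr_id n f : (forall k, k < n -> f k < n) ->
  (forall k, k.+1 < n -> f k < f k.+1) -> forall k, k < n -> f k = k.
Proof.
move=> hb hinc.
have ge : forall k, k < n -> k <= f k.
  elim=> [//|k IH] hk; have := IH (ltnW hk); have := hinc k hk; lia.
have le : forall d k, k + d < n -> f k + d <= f (k + d).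
  elim=> [|d IH] k hk; first by rewrite !addn0.
  have h1 : k + d < n by lia.
  have h2 : (k + d).+1 < n by lia.
  have := IH k h1; have := hinc (k + d) h2; have -> : k + d.+1 = (k + d).+1 by lia.
  lia.
move=> k hk; have := le (n.-1 - k) k ltac:(lia).
have := hb (k + (n.-1 - k)) ltac:(lia); have := ge k hk; lia.
Qed.

Lemma F_eq r n (pi : Grn r n) :
    (\sum_(i < n)
       let c := (nth (0, 0) (acode pi) i).1 in
       let e := (nth (0, 0) (acode pi) i).2 in
       (i.+1 - c + (0 < e) * (2 * (c - 1) + e))) = H (gword pi).
Proof.
transitivity (\sum_(i < n) T i.+1 (nth (0,0) (acode pi) i)).
  by apply: eq_bigr.
rewrite /acode (sum_rev (m := n)) ?size_acode_aux //.
by case: (gword_inv pi) => h1 h2; rewrite Gsum_acode.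
Qed.

Lemma gword_split r m (pi : Grn r m.+1) :
  gword pi = Lt pi ord0 :: map (Lt pi \o lift ord0) (enum 'I_m).
Proof. by rewrite gwordE enum_ordSl /= map_comp. Qed.

Lemma gword_s0 r m (pi : Grn r m.+1) :
  gword (gmul pi (s0 r m.+1)) =
  ((Lt pi ord0).1, val (Zp1 + pi.2 ord0)%R) :: map (Lt pi \o lift ord0) (enum 'I_m).
Proof.
rewrite gwordE enum_ordSl /=; congr (_ :: _).
  by rewrite /Lt permM perm1 !ffunE perm1.
rewrite -map_comp; apply: eq_map => i.
by rewrite /Lt /gmul /s0 /= permM perm1 !ffunE perm1 (_ : (lift ord0 i == 0 :> nat) = false) ?add0r.
Qed.

Lemma s0_bound r n (pi : Grn r n) :
  H (gword (gmul pi (s0 r n))) <= H (gword pi) + 1.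
Proof.
case: n pi => [|m] pi.
  have e : enum 'I_0 = [::] by apply: size0nil; rewrite size_enum_ord.
  by rewrite !gwordE e.
rewrite gword_s0 gword_split.
have := H_head (map (Lt pi \o lift ord0) (enum 'I_m))
  (x := Lt pi ord0) (x' := ((Lt pi ord0).1, val (Zp1 + pi.2 ord0)%R)) erefl.
have := @cw_bound (Lt pi ord0).1 (Lt pi ord0).1 (val (Zp1 + pi.2 ord0)%R) (val (pi.2 ord0)).
rewrite val_addZp.
have h1 : (val (Zp1 : 'I_(r.-1.+1)) + val (pi.2 ord0)) %% r.-1.+1 <= (val (pi.2 ord0)).+1.
  apply: leq_trans (leq_mod _ _) _.
  change (val (Zp1 : 'I_(r.-1.+1))) with (1 %% r.-1.+1); have := leq_mod 1 r.-1.+1; lia.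
move=> /(_ h1); rewrite /Lt /= => h2 h3; lia.
Qed.


Lemma enum_split n (i j : 'I_n) : val j = (val i).+1 ->
  exists A B, enum 'I_n = A ++ i :: j :: B /\
              map (tperm i j) (enum 'I_n) = A ++ j :: i :: B.
Proof.
move=> hij; set e := enum 'I_n.
have He : e = take i e ++ i :: j :: drop (val j).+1 e.
  rewrite -{1}(cat_take_drop i e); congr (_ ++ _).
  rewrite (drop_nth i) ?size_enum_ord ?ltn_ord // nth_ord_enum -hij.
  by rewrite (drop_nth j) ?size_enum_ord ?ltn_ord // nth_ord_enum.
exists (take i e), (drop (val j).+1 e); split=> //.
have U := enum_uniq 'I_n; rewrite -/e He cat_uniq /= in U.
case/and3P: U => _ /norP[iA /norP[jA _]] /and3P[/norP[_ iB] jB _].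
rewrite {1}He map_cat /= tpermL tpermR; congr (_ ++ _ :: _ :: _).
- rewrite -[RHS]map_id; apply/eq_in_map => x xA; rewrite tpermD //.
  + by move: xA; apply: contraTneq => <-.
  + by move: xA; apply: contraTneq => <-.
- rewrite -[RHS]map_id; apply/eq_in_map => x xB; rewrite tpermD //.
  + by move: xB; apply: contraTneq => <-.
  + by move: xB; apply: contraTneq => <-.
Qed.

Definition gsw r n (i j : 'I_n) : Grn r n := (tperm i j, [ffun => 0%R : color r]).

Lemma H_swapG r n (pi : Grn r n) (i j : 'I_n) : val j = (val i).+1 ->
  H (gword pi) + pw (Lt pi j) (Lt pi i) =
  H (gword (gmul pi (gsw r i j))) + pw (Lt pi i) (Lt pi j).
Proof.
move=> hij; have [A [B [e1 e2]]] := enum_split hij.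
have -> : gword (gmul pi (gsw r i j)) = map (Lt pi) (map (tperm i j) (enum 'I_n)).
  rewrite gwordE -(map_comp (Lt pi) (tperm i j)); apply: eq_map => x.
  by rewrite /Lt /gmul /gsw /= permM !ffunE add0r.
by rewrite e2 gwordE e1 !map_cat /= H_swap.
Qed.

Lemma gsw_invol r n (i j : 'I_n) : gmul (gsw r i j) (gsw r i j) = gone r n.
Proof.
rewrite /gmul /gsw /gone /=; congr (_, _).
  by apply/permP => x; rewrite permM tpermK perm1.
by apply/ffunP => x; rewrite !ffunE addr0.
Qed.

Lemma gen_bound r n (pi g : Grn r n) : is_gen g ->
  H (gword (gmul pi g)) <= H (gword pi) + 1.
Proof.
case/orP => [/eqP -> | /existsP[i /existsP[j /andP[/eqP hij /eqP ->]]]].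
  exact: s0_bound.
have := H_swapG pi hij; rewrite /gsw.
have := pw_bound (Lt pi i) (Lt pi j); lia.
Qed.

Lemma descent r n (pi : Grn r n) :
  pi = gone r n \/
  exists g pi', is_gen g /\ pi = gmul pi' g /\ H (gword pi') + 1 = H (gword pi).
Proof.
case: n pi => [|m] pi.
  left; case: pi => s z; rewrite /gone; congr (_, _).
    by apply/permP => -[].
  by apply/ffunP => -[].
case: (boolP (0 < val (pi.2 ord0))) => hz.
  right; exists (s0 r m.+1).
  exists (pi.1, [ffun i : 'I_m.+1 => if val i == 0 then (pi.2 i - Zp1)%R else pi.2 i]).
  set pi' := (pi.1, _).
  have epi : pi = gmul pi' (s0 r m.+1).
    case: pi hz @pi' => s z hz /=; rewrite /gmul /= mul1g; congr (_, _).
    apply/ffunP => i; rewrite !ffunE perm1; case: ifP => _.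
      by rewrite addrC subrK.
    by rewrite add0r.
  split; first by rewrite /is_gen eqxx.
  split=> //.
  have := H_head (map (Lt pi' \o lift ord0) (enum 'I_m))
    (x := Lt pi' ord0) (x' := ((Lt pi' ord0).1, val (Zp1 + pi'.2 ord0)%R)) erefl.
  have f1 : pi'.2 ord0 = (pi.2 ord0 - Zp1)%R by rewrite /pi' ffunE.
  have f2 : (Zp1 + pi'.2 ord0)%R = pi.2 ord0 by rewrite f1 addrC subrK.
  rewrite -gword_s0 -gword_split -epi f2 /Lt f1.
  have := val_subZp1 hz.
  move: (val (pi.2 ord0 - Zp1)%R) hz => v hz e.
  rewrite /cw /= -e; case: v e => [|v] e /=; lia.
case: (boolP [exists i : 'I_m.+1, exists j : 'I_m.+1, (val j == (val i).+1) &&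
   (((pi.1 j < pi.1 i) && (val (pi.2 i) == 0)) || ((pi.1 i < pi.1 j) && (0 < val (pi.2 j))))]).
  case/existsP => i /existsP[j /andP[/eqP hij hc]].
  right; exists (gsw r i j), (gmul pi (gsw r i j)); split.
    by apply/orP; right; apply/existsP; exists i; apply/existsP; exists j; rewrite hij !eqxx.
  split; first by rewrite gmulA gsw_invol gmul1.
  have := H_swapG pi hij; rewrite /pw /Lt /=.
  case/orP: hc => /andP[h1 h2].
  - have h3 : (pi.1 i < pi.1 j) = false by apply/negbTE; rewrite -leqNgt ltnW.
    rewrite !ltnS h1 h3 (eqP h2) /=; lia.
  - have h3 : (pi.1 j < pi.1 i) = false by apply/negbTE; rewrite -leqNgt ltnW.
    rewrite !ltnS h1 h3 h2 /=; lia.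
move=> hno; left.
have H1 : forall k, k < m.+1 -> val (pi.2 (inord k)) = 0.
  elim=> [|k IH] hk.
    have e0 : (inord 0 : 'I_m.+1) = ord0 by apply: val_inj; exact: inordK.
    by move: hz; rewrite -leqNgt leqn0 e0 => /eqP.
  have hk' : k < m.+1 by lia.
  have hij : val (inord k.+1 : 'I_m.+1) = (val (inord k : 'I_m.+1)).+1 by rewrite /= !inordK.
  move: hno; rewrite negb_exists => /forallP/(_ (inord k)); rewrite negb_exists.
  move=> /forallP/(_ (inord k.+1)); rewrite hij eqxx /= IH // eqxx andbT.
  have hne : pi.1 (inord k) != pi.1 (inord k.+1).
    rewrite (inj_eq perm_inj); apply/eqP => /(f_equal val); rewrite /= !inordK //; lia.
  rewrite negb_or => /andP[h1 h2].
  have h3 : pi.1 (inord k) < pi.1 (inord k.+1).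
    move: h1 hne; rewrite -leqNgt leq_eqVlt => /orP[/eqP/val_inj -> | //]; by rewrite eqxx.
  by move: h2; rewrite h3 /= -leqNgt leqn0 => /eqP.
have H2 : forall k, k.+1 < m.+1 -> pi.1 (inord k) < pi.1 (inord k.+1).
  move=> k hk.
  have hij : val (inord k.+1 : 'I_m.+1) = (val (inord k : 'I_m.+1)).+1 by rewrite /= !inordK //; lia.
  move: hno; rewrite negb_exists => /forallP/(_ (inord k)); rewrite negb_exists.
  move=> /forallP/(_ (inord k.+1)); rewrite hij eqxx /= H1 ?eqxx ?andbT; last lia.
  have hne : pi.1 (inord k) != pi.1 (inord k.+1).
    rewrite (inj_eq perm_inj); apply/eqP => /(f_equal val); rewrite /= !inordK //; lia.
  rewrite negb_or => /andP[h1 h2].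
  move: h1 hne; rewrite -leqNgt leq_eqVlt => /orP[/eqP/val_inj -> | //]; by rewrite eqxx.
have H3 := @incr_id m.+1 (fun k => val (pi.1 (inord k))) (fun k _ => ltn_ord _) H2.
case: pi hz hno H1 H2 H3 => s z /= hz hno H1 H2 H3.
rewrite /gone; congr (_, _).
  apply/permP => x; apply: val_inj; rewrite perm1 /=.
  by have := H3 x (ltn_ord x); rewrite inord_val.
apply/ffunP => x; rewrite ffunE; apply: val_inj => /=.
by have := H1 x (ltn_ord x); rewrite inord_val.
Qed.


Theorem lemma3p1 (r n : nat) (hr : 0 < r) (pi : Grn r n) :
  length_is pi
    (\sum_(i < n)
       let c := (nth (0, 0) (acode pi) i).1 in
       let e := (nth (0, 0) (acode pi) i).2 in
       (i.+1 - c + (0 < e) * (2 * (c - 1) + e))).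
Proof.
rewrite F_eq; split.
  suff : forall k (p : Grn r n), H (gword p) = k ->
      exists w, all (@is_gen r n) w /\ wprod w = p /\ size w = k by apply.
  elim=> [|k IH] p hp; case: (descent p) => [ep | [g [p' [hg [ep hH]]]]].
  - by exists [::]; rewrite ep.
  - lia.
  - by move: hp; rewrite ep H_gone.
  - have [w [hw [ew sw]]] := IH p' ltac:(lia).
    exists (rcons w g); by rewrite all_rcons hg hw wprod_rcons ew size_rcons sw ep.
move=> w hw <-; elim/last_ind: w hw => [|w g IH]; first by rewrite /wprod /= H_gone.
rewrite all_rcons => /andP[hg hw]; rewrite wprod_rcons size_rcons.
have := gen_bound (wprod w) hg; have := IH hw; lia.
Qed.
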